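(* Consider the miners' game with $n\ge2$ miners, parameters $R>0$, $N>0$, unit prices $\lambda_1,\dots,\lambda_n>0$, where miner $s_i$ chooses $\mu_i\ge0$ and receives profit $P_i=\frac{\mu_i}{\sum_{j=1}^n\mu_j}RN-\lambda_i\mu_i$ (the fraction being $0$ if $\sum_j\mu_j=0$). Relabel the miners so that $\lambda_1\le\lambda_2\le\dots\le\lambda_n$. Define $q$ as follows: start with $S'=\{s_1,s_2\}$ and $q=2$; while $q<n$ and $\lambda_{q+1}<\frac{\sum_{s_i\in S'}\lambda_i}{|S'|-1}$, add $s_{q+1}$ to $S'$ and increase $q$ by $1$. Let $\Lambda=\sum_{i=1}^q\lambda_i$ and define $$\mu_i^*=\frac{RN(q-1)}{\Lambda}\left(1-\frac{(q-1)\lambda_i}{\Lambda}\right)\ \text{for } i\le q,\qquad \mu_i^*=0\ \text{for } i>q.$$ Then $(\mu_1^*,\dots,\mu_n^* )$ is a Nash equilibrium of the miners' game.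
   Context: A Nash equilibrium is a profile $(\mu_1^*,\dots,\mu_n^* )$ with all $\mu_i^*\ge 0$ such that no miner $s_i$ can strictly increase $P_i$ by unilaterally changing $\mu_i^*$ to another value $\mu_i\ge0$. *)

(* Defs.v *)
From mathcomp Require Import all_boot all_order all_algebra.
Set Implicit Arguments. Unset Strict Implicit. Unset Printing Implicit Defensive.
Import Order.TTheory GRing.Theory Num.Theory.
Local Open Scope ring_scope.

(* Miners are indexed 0 .. n-1 (miner s_{i+1} has index i).
   Rw is the paper's parameter R, N the paper's N, lam i the unit price. *)
Section Game.
Variable (R : realFieldType) (n : nat) (Rw N : R) (lam : nat -> R).

Definition total (mu : nat -> R) : R := \sum_(j < n) mu j.

Definition profit (mu : nat -> R) (i : nat) : R :=
  (if total mu == 0 then 0 else mu i / total mu) * (Rw * N) - lam i * mu i.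

Definition deviate (mu : nat -> R) (i : nat) (m : R) : nat -> R :=
  fun j => if j == i then m else mu j.

Definition nash_equilibrium (mu : nat -> R) : Prop :=
  (forall i, (i < n)%N -> 0 <= mu i) /\
  (forall i (m : R), (i < n)%N -> 0 <= m ->
     ~ (profit (deviate mu i m) i > profit mu i)).

(* The fuel n suffices since q increases strictly and stays <= n. *)
Fixpoint qloop (fuel q : nat) : nat :=
  match fuel with
  | 0 => q
  | f.+1 =>
      if (q < n)%N && (lam q < (\sum_(i < q) lam i) / (q - 1)%:R)
      then qloop f q.+1 else q
  end.

Definition q_star : nat := qloop n 2.

Definition Lambda : R := \sum_(i < q_star) lam i.

Definition mu_star (i : nat) : R :=
  if (i < q_star)%N then
    Rw * N * (q_star - 1)%:R / Lambda * (1 - (q_star - 1)%:R * lam i / Lambda)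
  else 0.

End Game.

(* Main.v *)
Require Import Defs.
From mathcomp Require Import all_boot all_order all_algebra.
From mathcomp Require Import ring lra.
Import Order.TTheory GRing.Theory Num.Theory.
Local Open Scope ring_scope.

Section Proofs.
Variable (R : realFieldType) (n : nat) (lam : nat -> R).
Hypothesis lam_pos : forall i, (i < n)%N -> 0 < lam i.
Hypothesis lam_mono : forall i j, (i <= j)%N -> (j < n)%N -> lam i <= lam j.

Definition Inv (q : nat) : Prop :=
  forall i, (i < q)%N -> (q - 1)%:R * lam i < \sum_(j < q) lam j.

Lemma Inv_step q : (2 <= q)%N -> (q < n)%N -> Inv q ->
  lam q < (\sum_(i < q) lam i) / (q - 1)%:R -> Inv q.+1.
Proof.
move=> q2 qn Iq hq i iq.
have q1 : (0 < (q - 1)%:R :> R) by rewrite ltr0n subn_gt0 (leq_trans _ q2).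
rewrite ltr_pdivlMr // in hq.
rewrite big_ord_recr /= subSS subn0.
have -> : (q%:R : R) = (q - 1)%:R + 1.
  by rewrite natr1 subn1 prednK // (leq_trans _ q2).
have li : lam i <= lam q by apply: lam_mono.
have l0 : 0 <= lam i by apply/ltW/lam_pos/(leq_trans iq).
have : (q - 1)%:R * lam i <= (q - 1)%:R * lam q by rewrite ler_wpM2l // ltW.
nra.
Qed.

Lemma Inv2 : (2 <= n)%N -> Inv 2.
Proof.
move=> n2 i i2; rewrite big_ord_recr big_ord_recr big_ord0 /= add0r mul1r.
have h0 : 0 < lam 0 by apply: lam_pos; exact: (leq_trans _ n2).
have h1 : 0 < lam 1 by apply: lam_pos.
by case: i i2 => [|[|]] //= _; lra.
Qed.

Lemma qloop_spec f q : (2 <= q)%N -> (q <= n)%N -> Inv q -> (n <= f + q)%N ->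
  let r := qloop n lam f q in
  [/\ (2 <= r)%N, (r <= n)%N, Inv r &
     ((r < n)%N -> (\sum_(i < r) lam i) / (r - 1)%:R <= lam r)].
Proof.
elim: f q => [|f IH] q q2 qn Iq fq /=.
  split => //; by rewrite ltnNge fq.
case: ifP => [/andP[qn' hq] | hno].
  apply: IH => //; first exact: ltnW.
  - exact: Inv_step.
  - by rewrite addnS -addSn.
split => // qn'; move: hno; rewrite qn' /= => /negbT.
by rewrite -leNgt.
Qed.

End Proofs.

Lemma best_interior (R : realFieldType) (c l S mu m : R) :
  0 < S -> 0 <= m -> 0 <= mu -> 0 <= l -> (mu + S) * (mu + S) * l = c * S ->
  m / (m + S) * c - l * m <= mu / (mu + S) * c - l * mu.
Proof.
move=> S0 m0 mu0 l0 h.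
have hc : c = (mu + S) * (mu + S) * l / S by rewrite h mulfK // gt_eqF.
have u0 : m + S != 0 by rewrite gt_eqF // ltr_wpDl.
have v0 : mu + S != 0 by rewrite gt_eqF // ltr_wpDl.
rewrite -subr_ge0.
have -> : mu / (mu + S) * c - l * mu - (m / (m + S) * c - l * m)
   = l * ((mu - m) * (mu - m)) / (m + S).
  by rewrite hc; field; rewrite u0 v0 gt_eqF.
apply: divr_ge0; first by apply: mulr_ge0 => //; rewrite -expr2 sqr_ge0.
exact: ltW (ltr_wpDl m0 S0).
Qed.

Lemma best_corner (R : realFieldType) (c l T m : R) :
  0 < T -> 0 <= m -> 0 <= l -> c <= l * T ->
  m / (m + T) * c - l * m <= 0.
Proof.
move=> T0 m0 l0 h.
have u0 : 0 < m + T by rewrite ltr_wpDl.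
have -> : m / (m + T) * c - l * m = m * (c - l * (m + T)) / (m + T).
  by field; rewrite gt_eqF.
rewrite pmulr_lle0 ?invr_gt0 //.
apply: mulr_ge0_le0 => //; nra.
Qed.

Theorem theorem2 (R : realFieldType) (n : nat) (Rw N : R) (lam : nat -> R) :
  (2 <= n)%N -> 0 < Rw -> 0 < N ->
  (forall i, (i < n)%N -> 0 < lam i) ->
  (forall i j, (i <= j)%N -> (j < n)%N -> lam i <= lam j) ->
  nash_equilibrium n Rw N lam (mu_star n Rw N lam).
Proof.
move=> n2 Rw0 N0 lpos lmono.
have [q2 qn Iq Stop] := @qloop_spec R n lam lpos lmono n 2 (leqnn 2) n2
   (@Inv2 R n lam lpos n2) (leq_addr _ _).
rewrite -/(q_star n lam) in q2 qn Iq Stop.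
set q := q_star n lam in q2 qn Iq Stop.
set L := Lambda n lam.
have LE : L = \sum_(j < q) lam j by [].
have q1 : (0 < (q - 1)%:R :> R) by rewrite ltr0n subn_gt0 (leq_trans _ q2).
have L0 : 0 < L.
  have := Iq 0%N (ltnW q2); rewrite -LE => h.
  apply: le_lt_trans h; apply: mulr_ge0; first exact: ltW.
  by apply/ltW/lpos/(ltnW n2).
set c := Rw * N.
have c0 : 0 < c by rewrite mulr_gt0.
set mu := mu_star n Rw N lam.
have muE i : mu i = if (i < q)%N then c * (q - 1)%:R / L * (1 - (q - 1)%:R * lam i / L) else 0 by [].
have mupos i : (i < q)%N -> 0 < mu i.
  move=> iq; rewrite muE iq; apply: mulr_gt0.
    by apply: divr_gt0 => //; rewrite mulr_gt0.
  by rewrite subr_gt0 ltr_pdivrMr // mul1r LE; apply: Iq.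
set T := c * (q - 1)%:R / L.
have T0 : 0 < T by apply: divr_gt0 => //; rewrite mulr_gt0.
have totE : Defs.total n mu = T.
  rewrite /Defs.total -(big_mkord xpredT) (big_cat_nat (leq0n q) qn) /=.
  rewrite [X in _ + X]big1_seq ?addr0; last first.
    by move=> i /andP[_]; rewrite mem_index_iota => /andP[qi _]; rewrite muE ltnNge qi.
  rewrite big_mkord.
  under eq_bigr => i _ do rewrite muE ltn_ord.
  rewrite -mulr_sumr sumrB sumr_const card_ord -mulr_suml -mulr_sumr -LE /T.
  have -> : (1 : R) *+ q = (q - 1)%:R + 1 by rewrite natr1 subn1 prednK // (leq_trans _ q2).
  field; exact: lt0r_neq0.
split.
  move=> i _; case: (ltnP i q) => iq; [exact: ltW (mupos _ iq) | by rewrite muE ltnNge iq].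
move=> i m ilt m0; apply/negP; rewrite -leNgt.
have devE : Defs.total n (deviate mu i m) = m + (T - mu i).
  rewrite -totE /Defs.total (bigD1 (Ordinal ilt)) //=.
  rewrite [X in _ = _ + (X - _)](bigD1 (Ordinal ilt)) //=.
  rewrite /deviate eqxx.
  rewrite (eq_bigr (fun j : 'I_n => mu j)); last first.
    by move=> j hj; rewrite ifN.
  ring.
have l0 : 0 <= lam i by exact/ltW/lpos.
rewrite /profit devE totE /deviate eqxx (gt_eqF T0).
case: (ltnP i q) => iq.
  have S0 : 0 < T - mu i.
    rewrite muE iq /T -[X in X - _]mulr1 -mulrBr subKr; apply: mulr_gt0 => //.
    apply: divr_gt0 => //; apply: mulr_gt0 => //; exact: lpos.
  have -> : mu i / T = mu i / (mu i + (T - mu i)) by rewrite addrC subrK.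
  rewrite (gt_eqF (ltr_wpDl m0 S0)).
  apply: (@best_interior R (Rw * N)) => //; first exact/ltW/mupos.
  rewrite addrC subrK muE iq /T /c; field; exact: lt0r_neq0.
have -> : mu i = 0 by rewrite muE ltnNge iq.
rewrite subr0 mul0r mul0r mulr0 subr0 (gt_eqF (ltr_wpDl m0 T0)).
apply: best_corner => //.
have hs := Stop (leq_ltn_trans iq ilt).
have := lmono _ _ iq ilt.
rewrite -LE ler_pdivrMr // in hs.
move=> hl.
have : L <= (q - 1)%:R * lam i.
  by rewrite mulrC; apply: (le_trans hs); rewrite ler_wpM2r // ltW.
move=> hL; rewrite /T.
have hc : c * L <= c * ((q - 1)%:R * lam i) by rewrite ler_wpM2l // ltW.
rewrite -/c -subr_ge0.
have -> : lam i * (c * (q - 1)%:R / L) - c = (c * ((q - 1)%:R * lam i) - c * L) / L.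
  by field; exact: lt0r_neq0.
by apply: divr_ge0; [rewrite subr_ge0 | exact: ltW].
Qed.
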